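(* Suppose $\mathbf v_1=(v_{11},v_{12})\neq0$, $\mathbf v_2=(v_{21},v_{22})\neq0$ and $d\neq0$. Then for every point $[u,y_1,y_2]\in Z(\mathbf v,d)$ not in $Z(\mathbf v,d)\cap G(\mathbf v,d)$, there is exactly one point of $HC_F(\mathbf v,d)$ mapped to $[u,y_1,y_2]$ by $\rho$.
   Context: On $\mathbb{C}P^4$ with coordinates $[u,y_1,y_2,r_1,r_2]$, let $L_1=v_{11}(u-y_1)-v_{12}y_2$, $L_2=-v_{21}(u+y_1)-v_{22}y_2$, $f_1=(u-y_1)^2+y_2^2$, $f_2=(u+y_1)^2+y_2^2$, and $HC_F(\mathbf v,d)=\{f_1=r_1^2,\ f_2=r_2^2,\ L_2r_1-L_1r_2-dr_1r_2=0\}$. Let $Z(\mathbf v,d)\subset\mathbb{C}P^2$ (coordinates $[u,y_1,y_2]$) be the zero set of $h=(L_2^2f_1+L_1^2f_2-d^2f_1f_2)^2-4L_1^2L_2^2f_1f_2$, let $G(\mathbf v,d)=\{[u,y_1,y_2]\in\mathbb{C}P^2: L_1L_2=0\}$, and let $\rho:HC_F(\mathbf v,d)\to Z(\mathbf v,d)$ be $\rho([u,y_1,y_2,r_1,r_2])=[u,y_1,y_2]$. Parameters are complex. *)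

(* Defs.v *)
From HB Require Import structures.
From mathcomp Require Import all_boot all_order all_algebra.
From mathcomp Require Import reals complex.
Set Implicit Arguments. Unset Strict Implicit. Unset Printing Implicit Defensive.
Import Order.TTheory GRing.Theory Num.Theory.
Local Open Scope ring_scope.

Section Defs.
Variable C : fieldType.

(* Homogeneous coordinates: a point of CP^(n-1) is represented by a nonzero
   row vector of 'rV[C]_n; two vectors represent the same point iff
   they are proportional by a nonzero scalar. *)
Definition pequiv n (a b : 'rV[C]_n) : Prop := exists2 k : C, k != 0 & b = k *: a.

Definition coord n (x : 'rV[C]_n.+1) (k : nat) : C := x ord0 (inord k).

(* On CP^2 with coordinates [u, y1, y2] = [x_0, x_1, x_2]. *)
Definition Lone (v11 v12 : C) (x : 'rV[C]_3) : C :=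
  v11 * (coord x 0 - coord x 1) - v12 * coord x 2.
Definition Ltwo (v21 v22 : C) (x : 'rV[C]_3) : C :=
  - v21 * (coord x 0 + coord x 1) - v22 * coord x 2.
Definition fone (x : 'rV[C]_3) : C := (coord x 0 - coord x 1) ^+ 2 + coord x 2 ^+ 2.
Definition ftwo (x : 'rV[C]_3) : C := (coord x 0 + coord x 1) ^+ 2 + coord x 2 ^+ 2.

Definition hpoly (v11 v12 v21 v22 d : C) (x : 'rV[C]_3) : C :=
  let L1 := Lone v11 v12 x in let L2 := Ltwo v21 v22 x in
  let f1 := fone x in let f2 := ftwo x in
  (L2 ^+ 2 * f1 + L1 ^+ 2 * f2 - d ^+ 2 * f1 * f2) ^+ 2
  - 4%:R * L1 ^+ 2 * L2 ^+ 2 * f1 * f2.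

Definition inZ (v11 v12 v21 v22 d : C) (x : 'rV[C]_3) : Prop :=
  x != 0 /\ hpoly v11 v12 v21 v22 d x = 0.
Definition inG (v11 v12 v21 v22 : C) (x : 'rV[C]_3) : Prop :=
  x != 0 /\ Lone v11 v12 x * Ltwo v21 v22 x = 0.

Definition rho (p : 'rV[C]_5) : 'rV[C]_3 :=
  \row_(i < 3) p ord0 (widen_ord (isT : (3 <= 5)%N) i).

(* HC_F(v,d) in CP^4, coordinates [u,y1,y2,r1,r2] = [p_0,...,p_4] *)
Definition inHC (v11 v12 v21 v22 d : C) (p : 'rV[C]_5) : Prop :=
  let x := rho p in let r1 := coord p 3 in let r2 := coord p 4 in
  [/\ p != 0, fone x = r1 ^+ 2, ftwo x = r2 ^+ 2 &
      Ltwo v21 v22 x * r1 - Lone v11 v12 x * r2 - d * r1 * r2 = 0].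

End Defs.

(* Main.v *)
Require Import Defs.
From HB Require Import structures.
From mathcomp Require Import all_boot all_order all_algebra.
From mathcomp Require Import reals complex.
From mathcomp Require Import ring.
Import Order.TTheory GRing.Theory Num.Theory.
Local Open Scope ring_scope.

Section Helpers.
Variable C : numFieldType.

Lemma coordZ n (a : C) (x : 'rV[C]_n.+1) k : Defs.coord (a *: x) k = a * Defs.coord x k.
Proof. by rewrite /Defs.coord mxE. Qed.

Lemma foneZ (a : C) x : fone (a *: x) = a ^+ 2 * fone x.
Proof. rewrite /fone !coordZ; ring. Qed.
Lemma ftwoZ (a : C) x : ftwo (a *: x) = a ^+ 2 * ftwo x.
Proof. rewrite /ftwo !coordZ; ring. Qed.
Lemma LoneZ (a : C) v1 v2 x : Lone v1 v2 (a *: x) = a * Lone v1 v2 x.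
Proof. rewrite /Lone !coordZ; ring. Qed.
Lemma LtwoZ (a : C) v1 v2 x : Ltwo v1 v2 (a *: x) = a * Ltwo v1 v2 x.
Proof. rewrite /Ltwo !coordZ; ring. Qed.

Lemma coord_rho (p : 'rV[C]_5) k : (k < 3)%N -> Defs.coord (rho p) k = Defs.coord p k.
Proof.
move=> hk; rewrite /Defs.coord /rho mxE; congr (p ord0 _); apply: val_inj.
by rewrite /= !inordK //; apply: (leq_trans hk).
Qed.

Lemma two_neq0 : (2%:R : C) != 0.
Proof. by rewrite pnatr_eq0. Qed.

Lemma sign_uniq (L1 L2 d s1 s2 t1 t2 : C) :
  L1 != 0 -> L2 != 0 -> d != 0 -> t1 ^+ 2 = s1 ^+ 2 -> t2 ^+ 2 = s2 ^+ 2 ->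
  L2 * s1 - L1 * s2 - d * s1 * s2 = 0 ->
  L2 * t1 - L1 * t2 - d * t1 * t2 = 0 -> s1 = t1 /\ s2 = t2.
Proof.
move=> h1 h2 hd /eqP e1 /eqP e2 E1 E2.
move: e1 e2; rewrite !eqf_sqr => /orP[] /eqP e1 /orP[] /eqP e2.
- by [].
- subst t1 t2.
  have : 2%:R * L2 * s1 = 0.
    have -> : 2%:R * L2 * s1 = (L2 * s1 - L1 * s2 - d * s1 * s2)
       + (L2 * s1 - L1 * - s2 - d * s1 * - s2) by ring.
    by rewrite E1 E2 addr0.
  move/eqP; rewrite !mulf_eq0 (negbTE two_neq0) (negbTE h2) /= => /eqP hs1.
  move: E1; rewrite hs1 !(mulr0, mul0r, subr0, sub0r) => /eqP.
  rewrite oppr_eq0 mulf_eq0 (negbTE h1) /= => /eqP ->.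
  by rewrite oppr0.
- subst t1 t2.
  have : 2%:R * L1 * s2 = 0.
    have -> : 2%:R * L1 * s2 = - ((L2 * s1 - L1 * s2 - d * s1 * s2)
       + (L2 * - s1 - L1 * s2 - d * - s1 * s2)) by ring.
    by rewrite E1 E2 addr0 oppr0.
  move/eqP; rewrite !mulf_eq0 (negbTE two_neq0) (negbTE h1) /= => /eqP hs2.
  move: E1; rewrite hs2 !(mulr0, mul0r, subr0, sub0r) => /eqP.
  rewrite mulf_eq0 (negbTE h2) /= => /eqP ->.
  by rewrite oppr0.
- subst t1 t2.
  have : 2%:R * d * (s1 * s2) = 0.
    have -> : 2%:R * d * (s1 * s2) = - ((L2 * s1 - L1 * s2 - d * s1 * s2)
       + (L2 * - s1 - L1 * - s2 - d * - s1 * - s2)) by ring.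
    by rewrite E1 E2 addr0 oppr0.
  move/eqP; rewrite !mulf_eq0 (negbTE two_neq0) (negbTE hd) /= => /orP[] /eqP hs.
  + move: E1; rewrite hs !(mulr0, mul0r, subr0, sub0r) => /eqP.
    rewrite oppr_eq0 mulf_eq0 (negbTE h1) /= => /eqP ->.
    by rewrite !oppr0.
  + move: E1; rewrite hs !(mulr0, mul0r, subr0, sub0r) => /eqP.
    rewrite mulf_eq0 (negbTE h2) /= => /eqP ->.
    by rewrite !oppr0.
Qed.

Lemma sign_exist (L1 L2 d f1 f2 r1 r2 : C) :
  r1 ^+ 2 = f1 -> r2 ^+ 2 = f2 ->
  (L2 ^+ 2 * f1 + L1 ^+ 2 * f2 - d ^+ 2 * f1 * f2) ^+ 2
    - 4%:R * L1 ^+ 2 * L2 ^+ 2 * f1 * f2 = 0 ->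
  exists s1 s2 : C, [/\ s1 ^+ 2 = f1, s2 ^+ 2 = f2 &
    L2 * s1 - L1 * s2 - d * s1 * s2 = 0].
Proof.
move=> <- <- h.
have : (L2 * r1 - L1 * r2 - d * r1 * r2) * (L2 * -r1 - L1 * -r2 - d * -r1 * -r2)
  * ((L2 * r1 - L1 * -r2 - d * r1 * -r2) * (L2 * -r1 - L1 * r2 - d * -r1 * r2)) = 0.
  by rewrite -h; ring.
move/eqP; rewrite !mulf_eq0 => /orP[/orP[]|/orP[]] /eqP H.
- by exists r1, r2.
- by exists (-r1), (-r2); rewrite !sqrrN.
- by exists r1, (-r2); rewrite !sqrrN.
- by exists (-r1), r2; rewrite !sqrrN.
Qed.

Lemma HC_scale v11 v12 v21 v22 d (p : 'rV[C]_5) (x : 'rV[C]_3) (a : C) :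
  a != 0 -> inHC v11 v12 v21 v22 d p -> rho p = a *: x ->
  exists s1 s2, [/\ Defs.coord p 3 = a * s1, Defs.coord p 4 = a * s2,
    fone x = s1 ^+ 2, ftwo x = s2 ^+ 2 &
    Ltwo v21 v22 x * s1 - Lone v11 v12 x * s2 - d * s1 * s2 = 0].
Proof.
move=> ha [_ F1 F2 E] hr.
exists (Defs.coord p 3 / a), (Defs.coord p 4 / a).
set s1 := Defs.coord p 3 / a; set s2 := Defs.coord p 4 / a.
have e3 : Defs.coord p 3 = a * s1 by rewrite /s1 mulrC divfK.
have e4 : Defs.coord p 4 = a * s2 by rewrite /s2 mulrC divfK.
rewrite hr foneZ ftwoZ LoneZ LtwoZ e3 e4 in F1 F2 E.
have ha2 : a ^+ 2 != 0 by rewrite expf_neq0.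
split => //.
- by apply: (mulfI ha2); rewrite F1; ring.
- by apply: (mulfI ha2); rewrite F2; ring.
- apply: (mulfI ha2); rewrite mulr0 -E; ring.
Qed.

End Helpers.
Arguments sign_exist {C}.
Arguments sign_uniq {C}.
Arguments HC_scale {C}.
Arguments coord_rho {C}.
Arguments coordZ {C n}.

Theorem lemma8p5 (R : realType) (v11 v12 v21 v22 d : R[i]) (x : 'rV[R[i]]_3) :
  (v11, v12) != (0, 0) -> (v21, v22) != (0, 0) -> d != 0 ->
  inZ v11 v12 v21 v22 d x -> ~ inG v11 v12 v21 v22 x ->
  (exists p : 'rV[R[i]]_5, inHC v11 v12 v21 v22 d p /\ pequiv (rho p) x) /\
  (forall p q : 'rV[R[i]]_5,
      inHC v11 v12 v21 v22 d p -> pequiv (rho p) x ->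
      inHC v11 v12 v21 v22 d q -> pequiv (rho q) x ->
      pequiv p q).
Proof.
move=> _ _ hd [hx hh] hG.
have hL : Lone v11 v12 x != 0 /\ Ltwo v21 v22 x != 0.
  split; apply/eqP => e; apply: hG; split => //; by rewrite e ?mul0r ?mulr0.
case: hL => hL1 hL2.
split.
  have [s1 [s2 [e1 e2 E]]] := sign_exist (Lone v11 v12 x) (Ltwo v21 v22 x) d _ _ _ _
     (sqr_sqrtc (fone x)) (sqr_sqrtc (ftwo x)) hh.
  pose p : 'rV[R[i]]_5 := \row_(i < 5)
     (if val i == 3%N then s1 else if val i == 4%N then s2 else x ord0 (inord i)).
  have hrho : rho p = x.
    apply/rowP => j; rewrite /rho !mxE /=.
    case: j => [[|[|[|j]]] hj]; rewrite /= ?mxE /=; try by congr (x ord0 _); apply: val_inj; rewrite /= inordK.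
    by [].
  have c3 : Defs.coord p 3 = s1.
    rewrite /Defs.coord mxE; have -> : (inord 3 : 'I_5) = Ordinal (isT : (3 < 5)%N) by apply: val_inj; rewrite /= inordK.
    by [].

  have c4 : Defs.coord p 4 = s2.
    rewrite /Defs.coord mxE; have -> : (inord 4 : 'I_5) = Ordinal (isT : (4 < 5)%N) by apply: val_inj; rewrite /= inordK.
    by [].

  exists p; split; last by exists 1; rewrite ?oner_neq0 // scale1r.
  split; rewrite ?hrho ?c3 ?c4 //.
  apply: contra hx => /eqP p0; apply/eqP; by rewrite -hrho p0; apply/rowP => j; rewrite !mxE.
move=> p q Hp [k hk ep] Hq [l hl eq].
have ep' : rho p = k^-1 *: x by rewrite ep scalerA mulVf // scale1r.
have eq' : rho q = l^-1 *: x by rewrite eq scalerA mulVf // scale1r.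
have hk' : k^-1 != 0 by rewrite invr_eq0.
have hl' : l^-1 != 0 by rewrite invr_eq0.
have [s1 [s2 [p3 p4 F1 F2 E1]]] := HC_scale _ _ _ _ _ _ _ _ hk' Hp ep'.
have [t1 [t2 [q3 q4 G1 G2 E2]]] := HC_scale _ _ _ _ _ _ _ _ hl' Hq eq'.
have [st1 st2] := sign_uniq _ _ _ _ _ _ _ hL1 hL2 hd (etrans (esym G1) F1) (etrans (esym G2) F2) E1 E2.
exists (l^-1 / k^-1); first by rewrite mulf_neq0 ?invr_eq0.
apply/rowP => i; rewrite mxE.
have cp : forall r : 'rV[R[i]]_5, r ord0 i = Defs.coord r i by move=> r; rewrite /Defs.coord inord_val.
rewrite !cp; clear cp.
have key : forall (b : R[i]), b != 0 -> forall (r : 'rV[R[i]]_5), rho r = b *: x ->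
   forall k, (k < 3)%N -> Defs.coord r k = b * Defs.coord x k.
  by move=> b _ r hr k0 hk0; rewrite -coord_rho // hr coordZ.
case: i => [[|[|[|[|[|i]]]]] hi] //=.
- by rewrite (key _ hk' _ ep') // (key _ hl' _ eq') // mulrA divfK.
- by rewrite (key _ hk' _ ep') // (key _ hl' _ eq') // mulrA divfK.
- by rewrite (key _ hk' _ ep') // (key _ hl' _ eq') // mulrA divfK.
- by rewrite p3 q3 st1 mulrA divfK.
- by rewrite p4 q4 st2 mulrA divfK.
Qed.
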